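(* Let $\mathbf{x}=(\mathbf{x}_1,\mathbf{x}_2,\mathbf{x}_3)$ have i.i.d. Bernoulli$(0.5)$ coordinates, and let $\mathbf{y}$ be distributed as follows: if $\mathbf{x}_3=1$, $\mathbf{y}=\mathbf{x}_1$ with probability $0.9$ and $1-\mathbf{x}_1$ otherwise; if $\mathbf{x}_3=0$, $\mathbf{y}=\mathbf{x}_2$ with probability $0.9$ and $1-\mathbf{x}_2$ otherwise. Let $e_{\mathrm{encode}}(\mathbf{x})=\xi_1=[1,0,0]$ if $\mathbf{x}_3=1$ and $\xi_2=[0,1,0]$ otherwise. Then $e_{\mathrm{encode}}$ maximizes $\mathrm{EVAL\text{-}X}(q,e)$ over all reductive explanations $e$ (those with $|e(\mathbf{x})|\le 1$ for all $\mathbf{x}$, i.e. selecting at most one coordinate), and $e_{\mathrm{encode}}$ is encoding.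
   Context: $q$ is the joint distribution of $(\mathbf{y},\mathbf{x})$ just described. An explanation is a map $e$ from inputs to masks in $\{0,1\}^3$; $|e(\mathbf{x})|$ is the number of ones. $\mathbf{x}_{\mathbf{v}}$ denotes the values of the coordinates selected by $\mathbf{v}$; $\mathbf{x}_{e(\mathbf{x})}=(e(\mathbf{x}),\mathbf{x}_{e(\mathbf{x})})$ is written $(\mathbf{v},\mathbf{a})$; $\mathbf{E}_{\mathbf{v}}=\mathbb{1}[e(\mathbf{x})=\mathbf{v}]$. The EVAL-X score is $\mathrm{EVAL\text{-}X}(q,e)=\mathbb{E}_{(\mathbf{v},\mathbf{a})\sim q(\mathbf{x}_{e(\mathbf{x})})}\mathbb{E}_{\mathbf{y}\sim q(\mathbf{y}\mid \mathbf{x}_{e(\mathbf{x})}=(\mathbf{v},\mathbf{a}))}[\log q(\mathbf{y}\mid \mathbf{x}_{\mathbf{v}}=\mathbf{a})]$. $e$ is encoding if there is a set $\mathbf{S}$ of pairs with $q(\mathbf{x}_{e(\mathbf{x})}\in\mathbf{S})>0$ such that for every $(\mathbf{v},\mathbf{a})\in\mathbf{S}$, $\mathbf{y}$ is not conditionally independent of $\mathbf{E}_{\mathbf{v}}$ given $\mathbf{x}_{\mathbf{v}}=\mathbf{a}$. *)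

(* Defs.v *)
From HB Require Import structures.
From mathcomp Require Import all_boot all_order all_algebra.
From mathcomp Require Import reals exp.
Set Implicit Arguments. Unset Strict Implicit. Unset Printing Implicit Defensive.
Import Order.TTheory GRing.Theory Num.Theory.
Local Open Scope ring_scope.

(* Inputs x = (x_1,x_2,x_3) in {0,1}^3, coordinates indexed by 'I_3
   (x_1 = x 0, x_2 = x 1, x_3 = x 2). Masks are also in {0,1}^3. *)
Definition inp := {ffun 'I_3 -> bool}.
Definition xmask := {ffun 'I_3 -> bool}.

Definition c1 : 'I_3 := @Ordinal 3 0 isT.
Definition c2 : 'I_3 := @Ordinal 3 1 isT.
Definition c3 : 'I_3 := @Ordinal 3 2 isT.

Section Model.
Variable R : realType.

Definition qy (y : bool) (x : inp) : R :=
  let t := if x c3 then x c1 else x c2 in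
  if y == t then 9/10 else 1/10.

Definition qx (x : inp) : R := \prod_(i < 3) (1/2).

Definition qyx (y : bool) (x : inp) : R := qx x * qy y x.

(* x_v: the values of the coordinates selected by v, encoded as the
   vector which agrees with x on the support of v and is 0 elsewhere. *)
Definition restr (v : xmask) (x : inp) : inp := [ffun i => v i && x i].

Definition condV (y : bool) (v : xmask) (a : inp) : R :=
  (\sum_(x : inp | restr v x == a) qyx y x) /
  (\sum_(x : inp | restr v x == a) qx x).

Definition pE (e : inp -> xmask) (v : xmask) (a : inp) : R :=
  \sum_(x : inp | (e x == v) && (restr v x == a)) qx x.

Definition condE (e : inp -> xmask) (y : bool) (v : xmask) (a : inp) : R :=
  (\sum_(x : inp | (e x == v) && (restr v x == a)) qyx y x) / pE e v a.

Definition evalx (e : inp -> xmask) : R :=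
  \sum_(v : xmask) \sum_(a : inp)
     pE e v a * \sum_(y : bool) condE e y v a * ln (condV y v a).

Definition reductive (e : inp -> xmask) : Prop :=
  forall x, (#|[set i | e x i]| <= 1)%N.

(* Conditional independence of y and E_v = 1[e(x) = v] given x_v = a. *)
Definition cond_indep_E (e : inp -> xmask) (v : xmask) (a : inp) : Prop :=
  forall (y b : bool),
    (\sum_(x : inp | (restr v x == a) && ((e x == v) == b)) qyx y x) /
      (\sum_(x : inp | restr v x == a) qx x)
    = condV y v a *
      ((\sum_(x : inp | (restr v x == a) && ((e x == v) == b)) qx x) /
       (\sum_(x : inp | restr v x == a) qx x)).

Definition encoding (e : inp -> xmask) : Prop :=
  exists S : {set xmask * inp},
    0 < \sum_(x : inp | (e x, restr (e x) x) \in S) qx x /\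
    forall v a, (v, a) \in S -> ~ cond_indep_E e v a.

End Model.

Definition xi1 : xmask := [ffun i => i == c1].
Definition xi2 : xmask := [ffun i => i == c2].
Definition e_encode (x : inp) : xmask := if x c3 then xi1 else xi2.

(* Main.v *)
Set Warnings "-notation-overridden,-ambiguous-paths".
Require Import Defs.
From HB Require Import structures.
From mathcomp Require Import all_boot all_order all_algebra.
From mathcomp Require Import reals exp ring lra.
Import Order.TTheory GRing.Theory Num.Theory.
Local Open Scope ring_scope.
Definition mk (b1 b2 b3 : bool) : inp := [ffun i : 'I_3 => if val i == 0%N then b1 else if val i == 1%N then b2 else b3].
Lemma mk1 b1 b2 b3 : mk b1 b2 b3 c1 = b1. Proof. by rewrite ffunE. Qed.
Lemma mk2 b1 b2 b3 : mk b1 b2 b3 c2 = b2. Proof. by rewrite ffunE. Qed.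
Lemma mk3 b1 b2 b3 : mk b1 b2 b3 c3 = b3. Proof. by rewrite ffunE. Qed.
Lemma sum_inp (R : realType) (F : inp -> R) : \sum_(x : inp) F x = \sum_(b1 : bool) \sum_(b2 : bool) \sum_(b3 : bool) F (mk b1 b2 b3).
Proof.
rewrite (reindex (fun p : bool * bool * bool => mk p.1.1 p.1.2 p.2)) /=.
  by rewrite pair_big /= pair_big.
exists (fun x : inp => (x c1, x c2, x c3)) => [[[b1 b2] b3] _|x _] /=.
  by rewrite mk1 mk2 mk3.
by apply/ffunP => -[[|[|[|//]]] Hi]; rewrite ffunE /=; congr (x _); apply: val_inj.
Qed.
Section S.
Variable R : realType.
Definition xik (k : 'I_3) : xmask := [ffun j => j == k].
Definition m0 : xmask := [ffun _ => false].

Lemma qx_c (x : inp) : qx R x = 1/8.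
Proof. rewrite /qx !big_ord_recr big_ord0 /=. by field. Qed.

Lemma condV_eq y v a : condV R y v a =
  (\sum_(x | restr v x == a) qy R y x) / (\sum_(x | restr v x == a) 1).
Proof.
rewrite /condV /qyx; under eq_bigr do rewrite qx_c.
have -> : \sum_(x | restr v x == a) qx R x = 1/8 * \sum_(x | restr v x == a) 1.
  by rewrite mulr_sumr; apply: eq_bigr => x _; rewrite qx_c mulr1.
rewrite -!mulr_sumr invfM mulrACA divff ?mul1r //.
apply/eqP; lra.
Qed.

Lemma restr_xi k x x' : (restr (xik k) x' == restr (xik k) x) = (x' k == x k).
Proof.
apply/eqP/eqP => [/ffunP/(_ k)|H]; first by rewrite !ffunE eqxx.
by apply/ffunP => j; rewrite !ffunE; case: eqP => // ->.
Qed.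

Lemma restr_m0 x x' : (restr m0 x' == restr m0 x) = true.
Proof. by apply/eqP/ffunP => j; rewrite !ffunE. Qed.

Lemma condV_k y k x : condV R y (xik k) (restr (xik k) x) =
  (\sum_(x' : inp | x' k == x k) qy R y x') / (\sum_(x' : inp | x' k == x k) 1).
Proof. by rewrite condV_eq; congr (_ / _); apply: eq_bigl => x'; rewrite restr_xi. Qed.

Ltac expand := rewrite !sum_inp !big_bool /= /qy !mk1 !mk2 !mk3 /=.

Lemma condV_xi1 y x : condV R y xi1 (restr xi1 x) = if y == x c1 then 7/10 else 3/10.
Proof.
rewrite (condV_k _ c1).
rewrite big_mkcond [X in _ / X = _]big_mkcond; expand. by case: y; case: (x c1) => /=; field.
Qed.
Lemma condV_xi2 y x : condV R y xi2 (restr xi2 x) = if y == x c2 then 7/10 else 3/10.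
Proof.
rewrite (condV_k _ c2).
rewrite big_mkcond [X in _ / X = _]big_mkcond; expand. by case: y; case: (x c2) => /=; field.
Qed.
Lemma condV_xi3 y x : condV R y (xik c3) (restr (xik c3) x) = 1/2.
Proof.
rewrite (condV_k _ c3).
rewrite big_mkcond [X in _ / X = _]big_mkcond; expand. by case: y; case: (x c3) => /=; field.
Qed.
Lemma condV_m0 y x : condV R y m0 (restr m0 x) = 1/2.
Proof.
rewrite condV_eq; under eq_bigl => x' do rewrite restr_m0.
under [X in _ / X = _]eq_bigl => x' do rewrite restr_m0.
expand. by case: y => /=; field.
Qed.

Lemma sum_inpP (P : pred inp) (F : inp -> R) : \sum_(x | P x) F x =
  \sum_(b1 : bool) \sum_(b2 : bool) \sum_(b3 : bool)
     (if P (mk b1 b2 b3) then F (mk b1 b2 b3) else 0).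
Proof. by rewrite big_mkcond sum_inp. Qed.

Definition g x v := \sum_(y : bool) qy R y x * ln (condV R y v (restr v x)).

Lemma evalxE e : evalx R e = \sum_x qx R x * g x (e x).
Proof.
rewrite /evalx.
have H : forall v a, pE R e v a * \sum_y condE R e y v a * ln (condV R y v a) =
   \sum_(x | (e x == v) && (restr v x == a)) qx R x * g x v.
  move=> v a; rewrite mulr_sumr.
  case: (eqVneq (pE R e v a) 0) => [p0|pn0].
    rewrite big1; last by move=> y _; rewrite p0 mul0r.
    rewrite big1 // => x Px.
    have h0 : forall i, (e i == v) && (restr v i == a) -> 0 <= qx R i.
      by move=> i _; rewrite qx_c; lra.
    have := psumr_eq0P h0 p0 Px.
    by rewrite qx_c => h; exfalso; lra.
  under eq_bigr => y _ do rewrite /condE mulrA [pE R e v a * _]mulrC divfK // mulr_suml.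
  rewrite exchange_big /=; apply: eq_bigr => x /andP [_ /eqP <-].
  by rewrite /g mulr_sumr; apply: eq_bigr => y _; rewrite /qyx mulrA.
under eq_bigr => v _ do under eq_bigr => a _ do rewrite H big_mkcond.
under eq_bigr => v _ do rewrite exchange_big.
rewrite exchange_big; apply: eq_bigr => x _.
rewrite (bigD1 (e x)) //= [X in _ + X]big1 ?addr0; last first.
  move=> v /negPf ne; apply: big1 => a _; by rewrite eq_sym ne.
rewrite (bigD1 (restr (e x) x)) //= !eqxx /= big1 ?addr0 //.
by move=> a /negPf ne; rewrite eq_sym ne.
Qed.

Lemma red_cases (v : xmask) : (#|[set i | v i]| <= 1)%N -> v = m0 \/ exists k, v = xik k.
Proof.
rewrite leq_eqVlt ltnS leqn0 => /orP [/cards1P [k Hk] | /eqP /cards0_eq H0].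
  right; exists k; apply/ffunP => j; rewrite ffunE.
  by move/setP: Hk => /(_ j); rewrite !inE.
left; apply/ffunP => j; rewrite ffunE.
by move/setP: H0 => /(_ j); rewrite !inE.
Qed.

Lemma ln_facts : ln (3/10 : R) < ln (7/10) /\ 10 * ln (1/2 : R) <= 9 * ln (7/10) + ln (3/10).
Proof.
split; first by rewrite ltr_ln ?posrE; lra.
have a : ln (7/10 : R) = ln (1/2) + ln (7/5).
  by rewrite -lnM ?posrE; [congr ln; lra | lra | lra].
have b : ln (3/10 : R) = ln (1/2) + ln (3/5).
  by rewrite -lnM ?posrE; [congr ln; lra | lra | lra].
have c : ln (3/5 : R) + ln (5/3) = 0.
  by rewrite -lnM ?posrE; [rewrite -ln1; congr ln; lra | lra | lra].
have d : ln (5/3 : R) <= ln (7/5) + ln (7/5).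
  rewrite -lnM ?posrE; [rewrite ler_ln ?posrE; lra | lra | lra].
have f : 0 <= ln (7/5 : R) by apply: ln_ge0; lra.
lra.
Qed.

Lemma g_le x (v : xmask) : (#|[set i | v i]| <= 1)%N -> g x v <= g x (e_encode x).
Proof.
have [L1 L2] := ln_facts.
have hk : forall k : 'I_3, k = c1 \/ k = c2 \/ k = c3.
  by case=> [[|[|[|//]]] ?]; [left|right;left|right;right]; apply: val_inj.
move/red_cases => [->|[k ->]]; last case: (hk k) => [->|[->|->]];
rewrite /g /e_encode !big_bool; case Hc3 : (x c3) => /=;
rewrite ?condV_xi1 ?condV_xi2 ?condV_xi3 ?condV_m0 /qy Hc3 /=;
case: (x c1); case: (x c2) => /=; lra.
Qed.

Lemma xi21 : (xi2 == xi1) = false.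
Proof. by apply/eqP => /ffunP /(_ c1); rewrite !ffunE. Qed.

Lemma restr_idem v x : restr v (restr v x) = restr v x.
Proof. by apply/ffunP => j; rewrite !ffunE andbA andbb. Qed.

Lemma enc_eq b : (((if b then xi1 else xi2) == xi1) == true) = b.
Proof. by case: b; rewrite ?eqxx ?xi21. Qed.

Lemma key (A B C : R) : A / B = 7/10 * (C / B) -> B = 1/2 -> A = 7/10 * C.
Proof. by move=> h hB; move: h; rewrite hB; lra. Qed.

Lemma noCI a : a = restr xi1 a -> ~ cond_indep_E R e_encode xi1 a.
Proof.
move=> Ha H; have Hc : restr xi1 a c1 = a c1 by rewrite !ffunE.
move: (H (a c1) true); rewrite Ha Hc condV_xi1 eqxx !sum_inpP !big_bool /=.
rewrite !(restr_xi c1) /e_encode /qyx /qy !qx_c !mk1 !mk2 !mk3 !eqxx xi21 /=.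
case: (a c1) => /= /key h; move: (h ltac:(lra)); lra.
Qed.
End S.

Theorem lemma6 (R : realType) :
  reductive e_encode /\
  (forall e : inp -> xmask, reductive e -> evalx R e <= evalx R e_encode) /\
  encoding R e_encode.
Proof.
have redE : reductive e_encode.
  move=> x; rewrite /e_encode; case: (x c3).
    have -> : [set i | xi1 i] = [set c1] by apply/setP => j; rewrite !inE ffunE.
    by rewrite cards1.
  have -> : [set i | xi2 i] = [set c2] by apply/setP => j; rewrite !inE ffunE.
  by rewrite cards1.
split => //; split.
  move=> e he; rewrite !evalxE; apply: ler_sum => x _.
  by apply: ler_wpM2l; [rewrite qx_c; lra | exact: g_le].
exists [set p : xmask * inp | (p.1 == xi1) && (p.2 == restr xi1 p.2)]; split.
  rewrite (bigD1 (mk true true true)) /=; last first.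
    by rewrite inE /e_encode mk3 /= eqxx restr_idem eqxx.
  rewrite qx_c; apply: (@lt_le_trans _ _ (1/8)); first lra.
  rewrite lerDl; apply: sumr_ge0 => i _; rewrite qx_c; lra.
move=> v a; rewrite inE => /andP [/eqP /= -> /eqP Ha]; exact: noCI.
Qed.
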